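(* Let $f:\{0,1\}^N\to\{0,1\}$ be a partial function, and let $x\in\mathrm{Dom}(f)$. If $f(x)=0$, then \[\mathrm{C}_f(x)\leq\mathrm{RC}_f(x)(1+\log|f^{-1}(1)|)\] and if $f(x)=1$, then \[\mathrm{C}_f(x)\leq\mathrm{RC}_f(x)(1+\log|f^{-1}(0)|).\]
   Context: $\mathrm{C}_f(x)$ is the certificate complexity of $f$ at $x$ (minimum size of a partial assignment consistent with $x$ on which $f$ is constant over $\mathrm{Dom}(f)$). $\mathrm{RC}_f(x)$ is the randomized certificate complexity of $f$ at $x$, defined as the fractional block sensitivity of $x$ (the fractional packing number of the sensitive blocks of $x$). Logarithms are base 2. *)

(* Defs.v *)
From mathcomp Require Import all_boot all_order all_algebra.
From mathcomp Require Import all_classical all_reals all_analysis.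
Set Implicit Arguments. Unset Strict Implicit. Unset Printing Implicit Defensive.
Import Order.TTheory GRing.Theory Num.Theory.
Local Open Scope ring_scope.

Definition input (N : nat) := {ffun 'I_N -> bool}.

Definition pfun (N : nat) := input N -> option bool.

Definition dom (N : nat) (f : pfun N) : {set input N} :=
  [set x | f x != None].

Definition fpreim (N : nat) (f : pfun N) (b : bool) : {set input N} :=
  [set x | f x == Some b].

Definition is_cert (N : nat) (f : pfun N) (x : input N) (S : {set 'I_N}) : bool :=
  [forall y : input N, (y \in dom f) && [forall i in S, y i == x i] ==> (f y == f x)].

(* Certificate complexity C_f(x): minimum size of a certificate
   (setT is always a certificate, so the minimum is over a nonempty range). *)
Definition Ccomp (N : nat) (f : pfun N) (x : input N) : nat :=
  \big[minn/N]_(S : {set 'I_N} | is_cert f x S) #|S|.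

Definition flip (N : nat) (x : input N) (B : {set 'I_N}) : input N :=
  [ffun i => if i \in B then ~~ x i else x i].

Definition sensitive (N : nat) (f : pfun N) (x : input N) (B : {set 'I_N}) : bool :=
  (flip x B \in dom f) && (f (flip x B) != f x).

Definition frac_packing (R : realType) (N : nat) (f : pfun N) (x : input N)
    (w : {ffun {set 'I_N} -> R}) : Prop :=
  (forall B, 0 <= w B) /\
  (forall i : 'I_N, \sum_(B | sensitive f x B && (i \in B)) w B <= 1).

(* RC_f(x) = fractional block sensitivity of x: the fractional packing number
   of the sensitive blocks of x (supremum = maximum of the LP). *)
Definition RC (R : realType) (N : nat) (f : pfun N) (x : input N) : R :=
  sup [set v : R | exists w : {ffun {set 'I_N} -> R},
         frac_packing f x w /\ v = \sum_(B | sensitive f x B) w B].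

Definition log2 (R : realType) (r : R) : R := ln r / ln 2.

(* Main.v *)
Require Import Defs.
From mathcomp Require Import all_boot all_order all_algebra.
From mathcomp Require Import all_classical all_reals all_analysis.
From mathcomp Require Import ring lra zify.
Import Order.TTheory GRing.Theory Num.Theory.
Local Open Scope ring_scope.
Notation fset0 := (@finset.set0 _).

Definition Hn (R : realType) (k : nat) : R := \sum_(j < k) ((j.+1)%:R)^-1.

Lemma Hn_ge0 (R : realType) k : 0 <= Hn R k.
Proof. by apply: sumr_ge0 => j _; rewrite invr_ge0 ler0n. Qed.

Lemma HnS (R : realType) k : Hn R k.+1 = Hn R k + ((k.+1)%:R)^-1.
Proof. by rewrite /Hn big_ord_recr. Qed.

Lemma Hn_mono (R : realType) k l : Hn R k <= Hn R (k + l).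
Proof.
elim: l => [|l IH]; first by rewrite addn0.
rewrite addnS HnS; apply: (le_trans IH); rewrite lerDl invr_ge0 ler0n //.
Qed.

Lemma Hstep (R : realType) k a d : (k + a <= d)%N ->
  Hn R k + a%:R / d%:R <= Hn R (k + a).
Proof.
elim: a => [|a IH] H; first by rewrite mul0r addr0 addn0.
have H' : (k + a <= d)%N by apply: leq_trans H; rewrite addnS.
rewrite addnS HnS -natr1 mulrDl mul1r addrA.
apply: lerD; first exact: IH.
have dpos : (0 < d)%N by lia.
rewrite lef_pV2 ?posrE ?ltr0n //.
rewrite ler_nat; lia.
Qed.

Lemma card_split (T : finType) (A : {set T}) (P : pred T) :
  #|A| = (#|[set x in A | P x]| + #|[set x in A | ~~ P x]|)%N.
Proof.
rewrite -(cardsID [set x | P x] A); congr (_ + _)%N; apply: eq_card => x.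
  by rewrite !inE.
by rewrite !inE andbC.
Qed.

Lemma sum_const_set (R : realType) (T : finType) (A : {set T}) (P : pred T) (c : R) :
  \sum_(x in A | P x) c = c *+ #|[set x in A | P x]|.
Proof. by rewrite -sumr_const; apply: eq_bigl => x; rewrite !inE. Qed.

Lemma Hn_ln (R : realType) m : (0 < m)%N -> Hn R m <= 1 + ln (m%:R : R).
Proof.
elim: m => [//|m IH] _.
case: m IH => [|m] IH; first by rewrite HnS /Hn big_ord0 ln1 add0r addr0 invr1.
rewrite HnS; have := IH isT => {}IH.
set a : R := m.+1%:R.
have apos : 0 < a by rewrite ltr0n.
have key : 1 + ln (a / (a + 1)) <= a / (a + 1).
  have := expR_ge1Dx (ln (a / (a + 1))). rewrite lnK //.
  by rewrite posrE divr_gt0 // ltr_wpDr.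
rewrite ln_div ?posrE ?ltr_wpDr // in key.
have e : a / (a + 1) = 1 - (a + 1)^-1 by field; rewrite gt_eqF // ltr_wpDr.
rewrite e in key.
have -> : (m.+2%:R : R) = a + 1 by rewrite /a -natr1.
lra.
Qed.

Lemma ln2_le1 (R : realType) : 0 < ln (2 : R) <= 1.
Proof.
apply/andP; split; first by apply: ln_gt0; rewrite ltr1n.
rewrite -[X in _ <= X](expRK (1 : R)) ler_ln ?posrE ?expR_gt0 //.
by have := expR_ge1Dx (1 : R).
Qed.

Lemma Hn_log2 (R : realType) m : Hn R m <= 1 + log2 (m%:R : R).
Proof.
case: m => [|m].
  by rewrite /Hn big_ord0 /log2 ln0 // mul0r addr0.
have HH := Hn_ln R m.+1 (ltn0Sn m).
apply: (le_trans HH).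
rewrite lerD2l /log2.
have /andP [h1 h2] := ln2_le1 R.
have h3 : 0 <= ln (m.+1%:R : R) by apply: ln_ge0; rewrite ler1n.
rewrite ler_pdivlMr //. nra.
Qed.

Lemma greedy (R : realType) (N : nat) (n : nat) : forall F : {set {set 'I_N}},
  (#|F| <= n)%N -> fset0 \notin F ->
  exists S : {set 'I_N}, exists p : {set 'I_N} -> R,
   [/\ (forall B, B \in F -> exists2 i, i \in S & i \in B),
       (forall B, 0 <= p B),
       #|S|%:R <= \sum_(B in F) p B &
       (forall i, \sum_(B in F | i \in B) p B <= Hn R #|[set B in F | i \in B]|)].
Proof.
elim: n => [|n IHn] F cF F0.
  have -> : F = fset0 by apply/eqP; rewrite -cards_eq0; lia.
  exists fset0, (fun _ => 0); split.
  - by move=> B; rewrite inE.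
  - by [].
  - by rewrite cards0 big1.
  - by move=> i; rewrite big1 // Hn_ge0.
have [->|/set0Pn [B0 B0F]] := eqVneq F fset0.
  exists fset0, (fun _ => 0); split.
  - by move=> B; rewrite inE.
  - by [].
  - by rewrite cards0 big1.
  - by move=> i; rewrite big1 // Hn_ge0.
have : B0 != fset0 by apply: contraNneq F0 => <-.
case/set0Pn => j jB0.
pose deg i := #|[set B in F | i \in B]|.
pose i0 := [arg max_(i > j) deg i].
have Hmax : forall i, (deg i <= deg i0)%N.
  by rewrite /i0; case: arg_maxnP => // k _ Hk i; apply: Hk.
set d := deg i0.
have dpos : (0 < d)%N.
  apply: leq_trans (Hmax j); rewrite card_gt0; apply/set0Pn; exists B0.
  by rewrite inE B0F.
pose F' := [set B in F | i0 \notin B].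
have cF' : (#|F'| <= n)%N.
  have := card_split _ F (fun B => i0 \in B). rewrite -/F' -/(deg i0) -/d. lia.
have F'0 : fset0 \notin F'.
  by apply: contra F0; rewrite inE => /andP [].
have [S' [p' [hit' p'0 cS' deg']]] := IHn F' cF' F'0.
exists (i0 |: S'), (fun B : {set 'I_N} => if i0 \in B then ((d%:R)^-1 : R) else p' B); split.
- move=> B BF; case: (boolP (i0 \in B)) => h.
    by exists i0 => //; rewrite setU11.
  have BF' : B \in F' by rewrite inE BF h.
  by have [i iS iB] := hit' B BF'; exists i => //; rewrite setU1r.
- by move=> B; case: ifP => // _; rewrite invr_ge0 ler0n.
- rewrite (bigID (fun B : {set 'I_N} => i0 \in B)) /=.
  rewrite (eq_bigr (fun _ => (d%:R)^-1 : R)); last by move=> B /andP [_ ->].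
  rewrite sum_const_set -/(deg i0) -/d.
  rewrite (eq_bigr p'); last by move=> B /andP [_ /negbTE ->].
  have -> : \sum_(B in F | i0 \notin B) p' B = \sum_(B in F') p' B.
    by apply: eq_bigl => B; rewrite inE.
  rewrite -[d%:R^-1 *+ d]mulr_natl mulfV ?pnatr_eq0 -?lt0n //.
  rewrite cardsU1 natrD.
  have h1 : ((i0 \notin S')%:R : R) <= 1 by case: (i0 \notin S'); rewrite ?ler01 ?lexx.
  lra.
- move=> i.
  rewrite (bigID (fun B : {set 'I_N} => i0 \in B)) /=.
  rewrite (eq_bigr (fun _ => (d%:R)^-1 : R)); last by move=> B /andP [_ ->].
  have -> : \sum_(B | ((B \in F) && (i \in B)) && (i0 \in B)) (d%:R^-1 : R)
     = d%:R^-1 *+ #|[set B in [set B in F | i \in B] | i0 \in B]|.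
    by rewrite -(sum_const_set R _ [set B in F | i \in B] (fun B => i0 \in B));
      apply: eq_bigl => B; rewrite !inE.
  rewrite (eq_bigr p'); last by move=> B /andP [_ /negbTE ->].
  have -> : \sum_(B | ((B \in F) && (i \in B)) && (i0 \notin B)) p' B
            = \sum_(B in F' | i \in B) p' B.
    by apply: eq_bigl => B; rewrite !inE andbAC.
  set a := #|[set B in [set B in F | i \in B] | i0 \in B]|.
  have ek : #|[set B in F' | i \in B]| = #|[set B in [set B in F | i \in B] | i0 \notin B]|.
    by apply: eq_card => B; rewrite !inE andbAC.
  have edeg : deg i = (a + #|[set B in F' | i \in B]|)%N.
    by rewrite ek -card_split.
  rewrite -/(deg i) edeg.
  have Hd : (#|[set B in F' | i \in B]| + a <= d)%N by rewrite addnC -edeg; exact: Hmax.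
  have Hs := Hstep R _ _ _ Hd.
  have Hi := deg' i.
  rewrite addnC -mulr_natl.
  lra.
Qed.

Lemma flip0 N (x : input N) : flip x fset0 = x.
Proof. by apply/ffunP => i; rewrite ffunE inE. Qed.

Lemma flip_diff N (x y : input N) : flip x [set i | y i != x i] = y.
Proof.
apply/ffunP => i; rewrite ffunE inE.
by case: (y i) (x i) => [] [].
Qed.

Lemma RC_ub (R : realType) N (f : pfun N) (x : input N) (w : {ffun {set 'I_N} -> R}) :
  frac_packing f x w -> \sum_(B | sensitive f x B) w B <= RC R f x.
Proof.
move=> fw.
have hub : has_ubound [set v : R | exists w : {ffun {set 'I_N} -> R},
         frac_packing f x w /\ v = \sum_(B | sensitive f x B) w B].
  exists (\sum_(B | sensitive f x B) (1 : R)) => v [w' [[w0 w1] ->]].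
  apply: ler_sum => B sB.
  have : B != fset0.
    by apply: contraTneq sB => ->; rewrite /sensitive flip0 eqxx andbF.
  case/set0Pn => i iB.
  apply: le_trans (w1 i).
  rewrite (bigD1 B) /=; last by rewrite sB iB.
  by rewrite lerDl sumr_ge0.
by apply: ub_le_sup hub _ _; exists w.
Qed.

Lemma nb_neq (b : bool) : ~~ b <> b. Proof. by case: b. Qed.
Lemma opt_neg (b c : bool) : Some c != Some (~~ b) -> Some c = Some b.
Proof. by case: b; case: c. Qed.

Lemma bigmin_leq (T : finType) (P : pred T) (F : T -> nat) n0 i :
  P i -> (\big[minn/n0]_(j | P j) F j <= F i)%N.
Proof.
move=> Pi; have : i \in index_enum T by rewrite mem_index_enum.
elim: (index_enum T) => //= j s IH; rewrite inE big_cons.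
case/orP => [/eqP <-|/IH h]; first by rewrite Pi geq_minl.
by case: ifP => // _; rewrite geq_min h orbT.
Qed.

Lemma opt_ne (b : bool) : Some b != Some (~~ b). Proof. by case: b. Qed.

Lemma main_b (R : realType) N (f : pfun N) (x : input N) (b : bool) :
  f x = Some (~~ b) ->
  (Ccomp f x)%:R <= RC R f x * (1 + log2 (#|fpreim f b|%:R : R)).
Proof.
move=> fx.
pose F := [set [set i | (y : input N) i != x i] | y in fpreim f b].
have F0 : fset0 \notin F.
  apply/imsetP => -[y]; rewrite inE => /eqP fy /esym e.
  have exy : y = x.
    apply/ffunP => i; apply/eqP.
    have : i \notin [set i | y i != x i] by rewrite e inE.
    by rewrite inE negbK.
  by move: fy; rewrite exy fx => -[] /nb_neq.
have [S [p [hit p0 cS degb]]] := greedy R N #|F| F (leqnn _) F0.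
set m := #|fpreim f b|.
have cFm : (#|F| <= m)%N by apply: leq_imset_card.
have cert : is_cert f x S.
  apply/forallP => y; apply/implyP => /andP [yd /forallP ag].
  apply/negPn/negP => ne.
  have fy : f y = Some b.
    move: yd ne; rewrite inE fx; case: (f y) => [c|] //= _.
    exact: opt_neg.
  have BF : [set i | y i != x i] \in F.
    by apply: imset_f; rewrite inE fy.
  have [i iS] := hit _ BF; rewrite inE.
  by have := ag i; rewrite iS /= => ->.
have CS : (Ccomp f x <= #|S|)%N.
  exact: bigmin_leq.
have RC0 : 0 <= RC R f x.
  have := @RC_ub R N f x [ffun => 0].
  rewrite big1 => [|B _]; last by rewrite ffunE.
  apply; split => [B|i]; rewrite ?ffunE //.
  by rewrite big1 // => B _; rewrite ffunE.
have HL := Hn_log2 R m.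
case: (posnP m) => [m0|mpos].
  have F00 : F = fset0 by apply/eqP; rewrite -cards_eq0; lia.
  rewrite F00 big_set0 in cS.
  have S0 : (#|S| = 0)%N.
    by apply/eqP; rewrite -(eqr_nat R); apply/eqP; apply: le_anti; rewrite cS ler0n.
  have -> : Ccomp f x = 0%N by lia.
  rewrite mulr_ge0 //; apply: le_trans HL; exact: Hn_ge0.
have Hm1 : 1 <= Hn R m.
  have := Hn_mono R 1 (m - 1); rewrite subnKC //.
  by rewrite HnS /Hn big_ord0 add0r invr1.
have Hmpos : 0 < Hn R m by lra. 
pose w := [ffun B => if B \in F then p B / Hn R m else 0].
have fw : frac_packing f x w.
  split => [B|i].
    by rewrite ffunE; case: ifP => // _; rewrite divr_ge0 // ?p0 ?Hn_ge0.
  have -> : \sum_(B | sensitive f x B && (i \in B)) w B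
            = \sum_(B in F | i \in B) p B / Hn R m.
    rewrite big_mkcond [RHS]big_mkcond; apply: eq_bigr => B _.
    rewrite ffunE; case BF: (B \in F) => /=.
      have sB : sensitive f x B.
        case/imsetP: BF => y; rewrite inE => /eqP fy ->.
        by rewrite /sensitive flip_diff inE fy fx opt_ne.
      by rewrite sB.
    by case: ifP.
  rewrite -mulr_suml ler_pdivrMr // mul1r.
  apply: le_trans (degb i) _.
  have : (#|[set B in F | i \in B]| <= m)%N.
    apply: leq_trans cFm; apply: subset_leq_card; apply/fintype.subsetP => B.
    by rewrite inE => /andP [].
  move=> h; have := Hn_mono R #|[set B in F | i \in B]| (m - #|[set B in F | i \in B]|).
  by rewrite subnKC.
have val : \sum_(B | sensitive f x B) w B = (\sum_(B in F) p B) / Hn R m.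
  rewrite mulr_suml big_mkcond [RHS]big_mkcond; apply: eq_bigr => B _.
  rewrite ffunE; case BF: (B \in F) => /=.
    have sB : sensitive f x B.
      case/imsetP: BF => y; rewrite inE => /eqP fy ->.
      by rewrite /sensitive flip_diff inE fy fx opt_ne.
    by rewrite sB.
  by case: ifP.
have hRC := RC_ub R N f x w fw; rewrite val in hRC.
have h2 : (#|S|%:R : R) <= RC R f x * Hn R m.
  rewrite -ler_pdivrMr //; apply: le_trans hRC.
  by rewrite ler_pM2r ?invr_gt0.
have h3 : ((Ccomp f x)%:R : R) <= #|S|%:R by rewrite ler_nat.
have h4 : RC R f x * Hn R m <= RC R f x * (1 + log2 (m%:R : R)).
  by rewrite ler_wpM2l.
lra.
Qed.

Theorem lemma21 (R : realType) (N : nat) (f : pfun N) (x : input N) :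
  x \in dom f ->
  (f x = Some false ->
     (Ccomp f x)%:R <= RC R f x * (1 + log2 (#|fpreim f true|%:R : R))) /\
  (f x = Some true ->
     (Ccomp f x)%:R <= RC R f x * (1 + log2 (#|fpreim f false|%:R : R))).
Proof.
move=> _; split => h.
  exact: (main_b R N f x true h).
exact: (main_b R N f x false h).
Qed.
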